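(* Let $K$ and $S$ be compact Hausdorff spaces. The following are equivalent: (i) there exists a U-embedding $T\colon C(K)\to C(S)$; (ii) there exists a continuous embedding $h\colon K\to S$ admitting a linear extension operator of norm one, with $h(K)$ a $G_\delta$-subset of $S$.
   Context: $C(K)$, $C(S)$ carry the sup norm. A linear isometry $T\colon X\to Y$ is a U-embedding if every $x^*\in X^*$ has a unique $y^*\in Y^*$ with $T^*(y^* )=x^*$ and $\|y^*\|=\|x^*\|$. For a continuous embedding (homeomorphism onto its image) $h\colon K\to S$, a linear operator $v\colon C(K)\to C(S)$ is a linear extension operator for $h$ if $(vf)(h(k))=f(k)$ for every $f\in C(K)$ and $k\in K$ (equivalently $v^*(\delta_{h(k)})=\delta_k$ for all $k\in K$). *)

(* Defs.v *)
From HB Require Import structures.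
From mathcomp Require Import all_boot all_order all_algebra.
From mathcomp Require Import all_classical all_reals all_analysis.
Set Implicit Arguments. Unset Strict Implicit. Unset Printing Implicit Defensive.
Import Order.TTheory GRing.Theory Num.Theory.
Import numFieldNormedType.Exports.
Local Open Scope classical_set_scope.
Local Open Scope ring_scope.

(* Elements of C(K) are represented as functions f : K -> R with [continuous f]. *)

Definition supnorm (R : realType) (K : topologicalType) (f : K -> R) : R :=
  sup [set `|f k| | k in [set: K]].

Definition maps_cont (R : realType) (K S : topologicalType)
  (T : (K -> R) -> (S -> R)) : Prop :=
  forall f : K -> R, continuous f -> continuous (T f).

Definition lin_op (R : realType) (K S : topologicalType)
  (T : (K -> R) -> (S -> R)) : Prop :=
  forall (f g : K -> R) (a : R), continuous f -> continuous g ->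
    T (fun k => a * f k + g k) = (fun s => a * T f s + T g s).

Definition isometry_on (R : realType) (K S : topologicalType)
  (T : (K -> R) -> (S -> R)) : Prop :=
  forall f : K -> R, continuous f -> supnorm (T f) = supnorm f.

Definition op_bounded (R : realType) (K S : topologicalType)
  (T : (K -> R) -> (S -> R)) : Prop :=
  exists M : R, forall f : K -> R, continuous f -> supnorm (T f) <= M * supnorm f.

Definition opnorm (R : realType) (K S : topologicalType)
  (T : (K -> R) -> (S -> R)) : R :=
  sup [set supnorm (T f) | f in [set f : K -> R | continuous f /\ supnorm f <= 1]].

Definition dual_elem (R : realType) (K : topologicalType) (x : (K -> R) -> R) : Prop :=
  (forall (f g : K -> R) (a : R), continuous f -> continuous g ->
     x (fun k => a * f k + g k) = a * x f + x g) /\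
  (exists M : R, forall f : K -> R, continuous f -> `|x f| <= M * supnorm f).

Definition dnorm (R : realType) (K : topologicalType) (x : (K -> R) -> R) : R :=
  sup [set `|x f| | f in [set f : K -> R | continuous f /\ supnorm f <= 1]].

(* U-embedding: linear isometry T : C(K) -> C(S) such that every x* in C(K)^*
   has a unique norm-preserving y* in C(S)^* with T^* y* = x*.
   Two functionals on C(S) are equal when they agree on C(S). *)
Definition U_embedding (R : realType) (K S : topologicalType)
  (T : (K -> R) -> (S -> R)) : Prop :=
  maps_cont T /\ lin_op T /\ isometry_on T /\
  forall x : (K -> R) -> R, dual_elem x ->
    exists y : (S -> R) -> R,
      [/\ dual_elem y,
          (forall f : K -> R, continuous f -> y (T f) = x f),
          dnorm y = dnorm x &
          forall y' : (S -> R) -> R, dual_elem y' ->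
            (forall f : K -> R, continuous f -> y' (T f) = x f) ->
            dnorm y' = dnorm x ->
            forall g : S -> R, continuous g -> y' g = y g].

(* continuous embedding = homeomorphism onto its image *)
Definition top_embedding (K S : topologicalType) (h : K -> S) : Prop :=
  [/\ continuous h, injective h &
      forall U : set K, open U -> exists V : set S, open V /\ h @` U = V `&` range h].

Definition ext_op (R : realType) (K S : topologicalType) (h : K -> S)
  (v : (K -> R) -> (S -> R)) : Prop :=
  [/\ maps_cont v, lin_op v &
      forall f : K -> R, continuous f -> forall k : K, v f (h k) = f k].

Definition Gdelta (S : topologicalType) (A : set S) : Prop :=
  exists U : nat -> set S, (forall n, open (U n)) /\ A = \bigcap_n U n.

(* Main.v *)
Require Import Defs.
From HB Require Import structures.
From mathcomp Require Import all_boot all_order all_algebra.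
From mathcomp Require Import all_classical all_reals all_analysis.
From mathcomp Require Import ring lra.
Import Order.TTheory GRing.Theory Num.Theory.
Import numFieldNormedType.Exports.
Local Open Scope classical_set_scope.
Local Open Scope ring_scope.


Section Basics.
Variables (R : realType) (X : topologicalType).
Implicit Types (f g : X -> R).

Lemma cont_cst (c : R) : continuous (fun _ : X => c).
Proof. exact: cst_continuous. Qed.

Lemma cont_add f g : continuous f -> continuous g -> continuous (fun x => f x + g x).
Proof. move=> cf cg x; exact: (@continuousD R R^o X f g x (cf x) (cg x)). Qed.

Lemma cont_mul f g : continuous f -> continuous g -> continuous (fun x => f x * g x).
Proof. move=> cf cg x; exact: (@continuousM R X f g x (cf x) (cg x)). Qed.

Lemma cont_opp f : continuous f -> continuous (fun x => - f x).
Proof. move=> cf x; exact: (@continuousN R R^o X f x (cf x)). Qed.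

Lemma cont_norm f : continuous f -> continuous (fun x => `|f x|).
Proof.
move=> cf x; apply: (continuous_comp (f:=f) (g:=Num.norm)); first exact: cf.
exact: norm_continuous.
Qed.

Lemma cont_lin (a : R) f g : continuous f -> continuous g ->
  continuous (fun x => a * f x + g x).
Proof. by move=> cf cg; apply: cont_add => //; apply: cont_mul => //; apply: cont_cst. Qed.

Lemma cont_max f g : continuous f -> continuous g -> continuous (fun x => Num.max (f x) (g x)).
Proof. by move=> cf cg; exact: (@max_fun_continuous _ X R f g). Qed.

End Basics.
Arguments cont_cst {R X} c.
Arguments cont_add {R X f g}.
Arguments cont_mul {R X f g}.
Arguments cont_opp {R X f}.
Arguments cont_norm {R X f}.
Arguments cont_lin {R X} a {f g}.
Arguments cont_max {R X f g}.


Section Sup.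
Variables (R : realType) (X : topologicalType).
Hypothesis cX : compact [set: X].
Implicit Types (f g : X -> R).

Lemma sn_ub f : continuous f -> has_ubound [set `|f k| | k in [set: X]].
Proof.
move=> cf.
have cpt : compact [set f x | x in [set: X]].
  by apply: continuous_compact => //; exact: continuous_subspaceT.
have := compact_bounded cpt; case=> M [Mr HM].
exists (M + 1) => _ [k _ <-]; apply: (HM (M + 1)); first by rewrite ltrDl.
by exists k.
Qed.

Lemma sn_ge f k : continuous f -> `|f k| <= supnorm f.
Proof. by move=> cf; apply: ub_le_sup; [exact: sn_ub| by exists k]. Qed.

Lemma sn_ge0 f : continuous f -> 0 <= supnorm f.
Proof.
move=> cf; have [[k _]|] := pselect ([set: X] !=set0).
  exact: le_trans (normr_ge0 (f k)) (sn_ge f k cf).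
move=> /set0P/negP; rewrite negbK => /eqP X0; rewrite /supnorm.
have -> : [set `|f k| | k in [set: X]] = set0.
  by apply/seteqP; split => // x [k _ _]; suff : (set0 : set X) k by []; rewrite -X0.
by rewrite sup0.
Qed.

Lemma sn_le f (M : R) : 0 <= M -> (forall k, `|f k| <= M) -> supnorm f <= M.
Proof.
move=> M0 HM; have [[k _]|] := pselect ([set: X] !=set0).
  by apply: ge_sup; [exists `|f k|, k| move=> _ [x _ <-]].
move=> /set0P/negP; rewrite negbK => /eqP X0; rewrite /supnorm.
have -> : [set `|f k| | k in [set: X]] = set0.
  by apply/seteqP; split => // x [k _ _]; suff : (set0 : set X) k by []; rewrite -X0.
by rewrite sup0.
Qed.

Lemma sn_adh f (e : R) : continuous f -> 0 < e -> [set: X] !=set0 ->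
  exists k, supnorm f - e < `|f k|.
Proof.
move=> cf e0 [k0 _].
have hs : has_sup [set `|f k| | k in [set: X]].
  by split; [exists `|f k0|, k0 | exact: sn_ub].
by have [_ [k _ <-] H] := sup_adherent e0 hs; exists k.
Qed.

End Sup.
Arguments sn_ub {R X} cX {f}.
Arguments sn_ge {R X} cX {f} k.
Arguments sn_ge0 {R X} cX {f}.
Arguments sn_le {R X f M}.
Arguments sn_adh {R X} cX {f e}.

Set Implicit Arguments.


Definition linC (R : realType) (X : topologicalType) (L : (X -> R) -> R) :=
  forall (f g : X -> R) (a : R), continuous f -> continuous g ->
    L (fun k => a * f k + g k) = a * L f + L g.


Arguments linC {R X}.
Section Lin.
Variables (R : realType) (X : topologicalType).
Implicit Types (f g : X -> R) (L x : (X -> R) -> R).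

Lemma linC_0 L : linC L -> L (fun _ => 0) = 0.
Proof.
move=> hL; have := hL (fun _ => 0) (fun _ => 0) 1 (cont_cst 0) (cont_cst 0).
have -> : (fun _ : X => 1 * (0:R) + 0) = (fun _ => 0) by apply: funext => ?; rewrite mul1r addr0.
move=> H; have := congr1 (fun z => z - L (fun _ => 0)) H.
by rewrite /= mul1r addrK subrr.
Qed.

Lemma linC_add L f g : linC L -> continuous f -> continuous g ->
  L (fun k => f k + g k) = L f + L g.
Proof.
move=> hL cf cg; rewrite -[L f]mul1r -hL //.
by congr L; apply: funext => k; rewrite mul1r.
Qed.

Lemma linC_scale L f a : linC L -> continuous f -> L (fun k => a * f k) = a * L f.
Proof.
move=> hL cf; rewrite -[a * L f]addr0 -(linC_0 hL) -hL //; last exact: cont_cst.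
by congr L; apply: funext => k; rewrite addr0.
Qed.

Lemma linC_sub L f g : linC L -> continuous f -> continuous g ->
  L (fun k => f k - g k) = L f - L g.
Proof.
move=> hL cf cg.
have -> : (fun k => f k - g k) = (fun k => (-1) * g k + f k).
  by apply: funext => k; rewrite mulN1r addrC.
by rewrite hL // mulN1r addrC.
Qed.

Lemma dual_linC x : dual_elem x -> linC x.
Proof. by case. Qed.

Lemma lin_op_pt (S : topologicalType) (T : (X -> R) -> (S -> R)) (s : S) :
  lin_op T -> linC (fun f => T f s).
Proof. by move=> hT f g a cf cg /=; rewrite hT. Qed.

Hypothesis cX : compact [set: X].

Lemma linC_bound L (c : R) : linC L -> 0 <= c ->
  (forall f, continuous f -> supnorm f <= 1 -> `|L f| <= c) ->
  forall f, continuous f -> `|L f| <= c * supnorm f.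
Proof.
move=> hL c0 H f cf; set n := supnorm f.
have n0 : 0 <= n by have := sn_ge0 cX cf.
have [nz|npos] := eqVneq n 0.
  have -> : f = (fun _ => 0).
    apply: funext => k; apply/eqP; rewrite -normr_le0; have := sn_ge cX k cf; by rewrite -/n nz.
  by rewrite linC_0 // normr0 mulr_ge0.
have np : 0 < n by rewrite lt_def npos n0.
have cg : continuous (fun k => n^-1 * f k) by apply: cont_mul => //; exact: cont_cst.
have g1 : supnorm (fun k => n^-1 * f k) <= 1.
  apply: sn_le => // k; rewrite normrM ger0_norm ?invr_ge0 //.
  rewrite ler_pdivrMl // mulr1 /n. by have := sn_ge cX k cf.
have := H _ cg g1; rewrite (linC_scale _ hL cf) normrM ger0_norm ?invr_ge0 // => h.
have -> : `|L f| = n * (n^-1 * `|L f|) by rewrite mulrA mulfV // mul1r.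
by rewrite [c * n]mulrC ler_wpM2l.
Qed.

Lemma dual_bound x : dual_elem x -> exists M, 0 <= M /\
  forall f, continuous f -> `|x f| <= M * supnorm f.
Proof.
case=> _ [M HM]; exists (Num.max M 0); split; first by rewrite le_max lexx orbT.
move=> f cf; apply: (le_trans (HM f cf)); apply: ler_wpM2r; first by have := sn_ge0 cX cf.
by rewrite le_max lexx.
Qed.

Lemma dn_set_sup x : dual_elem x ->
  has_sup [set `|x f| | f in [set f : X -> R | continuous f /\ supnorm f <= 1]].
Proof.
move=> dx; have [M [M0 HM]] := dual_bound dx; split.
  exists `|x (fun _ => 0)|, (fun _ => 0) => //; split; first exact: cont_cst.
  by apply: sn_le => // k; rewrite normr0.
exists M => _ [f [cf f1] <-]; apply: (le_trans (HM f cf)).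
by rewrite -[leRHS]mulr1 ler_wpM2l.
Qed.

Lemma dn_ge x f : dual_elem x -> continuous f -> supnorm f <= 1 -> `|x f| <= dnorm x.
Proof.
move=> dx cf f1; apply: ub_le_sup; first by case: (dn_set_sup dx).
by exists f.
Qed.

Lemma dn_ge0 x : dual_elem x -> 0 <= dnorm x.
Proof.
move=> dx; apply: le_trans (dn_ge dx (cont_cst 0) _) => //.
by apply: sn_le => // k; rewrite normr0.
Qed.

Lemma dn_le x (c : R) : 
  (forall f, continuous f -> supnorm f <= 1 -> `|x f| <= c) -> dnorm x <= c.
Proof.
move=> H; apply: ge_sup.
  exists `|x (fun _ => 0)|, (fun _ => 0) => //; split; first exact: cont_cst.
  by apply: sn_le => // k; rewrite normr0.
by move=> _ [f [cf f1] <-]; exact: H.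
Qed.

Lemma dn_adh x (e : R) : dual_elem x -> 0 < e ->
  exists f, [/\ continuous f, supnorm f <= 1 & dnorm x - e < `|x f|].
Proof.
move=> dx e0; have [_ [f [cf f1] <-] H] := sup_adherent e0 (dn_set_sup dx).
by exists f.
Qed.

Lemma dual_norm_le x f : dual_elem x -> continuous f -> `|x f| <= dnorm x * supnorm f.
Proof.
move=> dx cf; apply: linC_bound => //; first exact: dual_linC.
  exact: dn_ge0.
by move=> g cg g1; exact: dn_ge.
Qed.

End Lin.

Unset Implicit Arguments.

Lemma tri3 (R : realType) (rs rs' ms ms' i e : R) : i < e / 3 ->
  rs <= ms + i -> ms <= rs -> rs' <= ms' + i -> ms' <= rs' ->
  - (e / 3) < ms - ms' -> ms - ms' < e / 3 -> - e < rs - rs' /\ rs - rs' < e.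
Proof. move=> *; split; lra. Qed.

Section Peak.
Variables (R : realType) (S : topologicalType).
Hypotheses (hS : hausdorff_space S) (cS : compact [set: S]).

Fixpoint fmax (t : nat -> S -> R) (N : nat) (s : S) : R :=
  if N is N'.+1 then Num.max (fmax t N' s) (t N' s) else 0.

Lemma fmax_cont t N : (forall n, continuous (t n)) -> continuous (fmax t N).
Proof.
move=> ct; elim: N => [|N IH] /=; first exact: cont_cst.
exact: cont_max.
Qed.

Lemma fmax_ge t N n s : (n < N)%N -> t n s <= fmax t N s.
Proof.
elim: N => [//|N IH]; rewrite ltnS leq_eqVlt => /orP[/eqP ->|/IH h] /=.
  by rewrite le_max lexx orbT.
by rewrite le_max h.
Qed.

Lemma fmax_ge0 t N s : 0 <= fmax t N s.
Proof. by elim: N => [|N IH] //=; rewrite le_max IH. Qed.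

Lemma fmax_le t N s c : 0 <= c -> (forall n, (n < N)%N -> t n s <= c) -> fmax t N s <= c.
Proof.
move=> c0; elim: N => [|N IH] H //=.
rewrite ge_max IH ?H //; move=> n nN; apply: H; exact: ltnW.
Qed.

Lemma peak_fun (A : set S) : closed A -> Gdelta A ->
  exists phi : S -> R, [/\ continuous phi, (forall s, 0 <= phi s <= 1) &
     (forall s, phi s = 1 <-> A s)].
Proof.
move=> clA [U [oU AU]].
have nS := compact_normal hS cS.
have : forall n, exists f : S -> R, [/\ continuous f,
    (forall s, A s -> f s = 0), (forall s, ~ U n s -> f s = 1) & (forall s, 0 <= f s <= 1)].
  move=> n.
  have cB : closed (~` U n) by exact: open_closedC.
  have AB : A `&` ~` U n = set0.
    by apply/seteqP; split => // s [As]; rewrite AU in As; apply; exact: As.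
  have [f [cf fA fB fr]] := urysohn_ext_itv nS clA cB AB (@ltr01 R).
  exists f; split => //.
  - by move=> s As; apply: fA; exists s.
  - by move=> s Us; apply: fB; exists s.
  - by move=> s; have /= := fr (f s) (ex_intro2 _ _ s I erefl); rewrite in_itv.
case/choice => f Hf.
pose t n s := Num.min (f n s) n.+1%:R^-1.
have t0 n s : 0 <= t n s.
  by rewrite /t le_min invr_ge0 ler0n andbT; case: (Hf n) => _ _ _ /(_ s) /andP[].
have t1 n s : t n s <= n.+1%:R^-1 by rewrite /t ge_min lexx orbT.
have t11 n s : t n s <= 1.
  by apply: le_trans (t1 n s) _; rewrite invf_le1 ?ltr0n // ler1n.
have ct n : continuous (t n).
  move=> s; apply: (@continuous_min R S). case: (Hf n) => [cf _ _ _]; exact: cf.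
  exact: cont_cst.
pose E s := [set t n s | n in [set: nat]].
have hE s : has_sup (E s).
  by split; [exists (t 0%N s), 0%N | exists 1 => _ [n _ <-]].
pose rho s := sup (E s).
have rge n s : t n s <= rho s by apply: ub_le_sup; [case: (hE s)| exists n].
have rho0 s : 0 <= rho s by exact: le_trans (t0 0%N s) (rge 0%N s).
have rho1 s : rho s <= 1 by apply: ge_sup; [case: (hE s) | move=> _ [n _ <-]].
have rhoN N s : rho s <= fmax t N s + N.+1%:R^-1.
  apply: ge_sup; first by case: (hE s).
  move=> _ [n _ <-]; case: (ltnP n N) => nN.
    by rewrite -[t n s]addr0; apply: lerD; [exact: fmax_ge | rewrite invr_ge0 ler0n].
  rewrite -[t n s]add0r; apply: lerD; first exact: fmax_ge0.
  apply: le_trans (t1 n s) _; rewrite lef_pV2 ?posrE ?ltr0n // ler_nat.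
  by [].
have rhoM N s : fmax t N s <= rho s by apply: fmax_le => // n _.
have crho : continuous rho.
  move=> s; apply/cvgrPdist_lt => e e0.
  have [N HN] := ltr_add_invr (divr_gt0 e0 (ltr0n R 3)); rewrite add0r in HN.
  have cM := fmax_cont t N ct s.
  move/cvgrPdist_lt: cM => /(_ _ (divr_gt0 e0 (ltr0n R 3))).
  apply: filterS => s' hs'.
  have a1 := rhoN N s; have a2 := rhoM N s; have a3 := rhoN N s'; have a4 := rhoM N s'.
  move: hs'; rewrite !ltr_norml => /andP[b1 b2].
  by have [] := @tri3 R _ _ _ _ _ _ HN a1 a2 a3 a4 b1 b2 => -> ->.
exists (fun s => 1 - rho s); split.
- by apply: cont_add; [exact: cont_cst | exact: cont_opp].
- by move=> s; rewrite subr_ge0 rho1 /= lerBlDr lerDl rho0.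
move=> s; split.
  move=> /eqP; rewrite subr_eq addrC -subr_eq subrr eq_sym => /eqP r0.
  rewrite AU => n _; apply: contrapT => Un.
  case: (Hf n) => _ _ /(_ s Un) fn1 _.
  have : t n s <= 0 by rewrite -r0.
  by rewrite /t fn1 ge_min ler10 /= invr_le0 leNgt ltr0n.
move=> As; suff -> : rho s = 0 by rewrite subr0.
apply/eqP; rewrite eq_le rho0 andbT; apply: ge_sup; first by case: (hE s).
move=> _ [n _ <-]; rewrite /t ge_min; case: (Hf n) => _ /(_ s As) -> _ _.
by rewrite lexx.
Qed.

End Peak.

Lemma abs2 (R : realType) (a c D : R) : `|a + c| <= D -> `|a - c| <= D -> `|a| + `|c| <= D.
Proof.
move=> /ler_normlP[h1 h2] /ler_normlP[h3 h4].
have [a0|a0] := lerP 0 a; have [c0|c0] := lerP 0 c;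
  rewrite ?(ger0_norm a0) ?(ltr0_norm a0) ?(ger0_norm c0) ?(ltr0_norm c0); lra.
Qed.

Lemma mul_le_abs (R : realType) (M x : R) : 0 <= x -> x <= 1 -> M * x <= `|M|.
Proof.
move=> x0 x1; apply: le_trans (ler_norm _) _; rewrite normrM (ger0_norm x0).
by rewrite -[leRHS]mulr1 ler_wpM2l.
Qed.

Lemma small_zero (R : realType) (a M : R) : 0 <= M ->
  (forall e, 0 < e -> `|a| <= M * e) -> a = 0.
Proof.
move=> M0 H; apply/normr0_eq0/le_anti; rewrite normr_ge0 andbT.
case: (lerP `|a| 0) => // a0.
have e0 : 0 < `|a| / (M + 1) by rewrite divr_gt0 // ltr_wpDl.
have := H _ e0; rewrite mulrA ler_pdivlMr ?ltr_wpDl // => h.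
have : `|a| <= 0 by nra.
by rewrite leNgt a0.
Qed.

Section Dir2.
Variables (R : realType) (K S : topologicalType).
Hypotheses (hK : hausdorff_space K) (cK : compact [set: K])
  (hS : hausdorff_space S) (cS : compact [set: S]) (neK : [set: K] !=set0).
Variables (h : K -> S) (v : (K -> R) -> (S -> R)).
Hypotheses (ch : continuous h) (ev : ext_op h v) (bv : op_bounded v) (nv : opnorm v = 1)
  (gd : Gdelta (range h)).

Lemma closed_range : closed (range h).
Proof.
apply: compact_closed hS _; apply: continuous_compact => //.
exact: continuous_subspaceT.
Qed.

Lemma v_contr f : continuous f -> forall s, `|v f s| <= supnorm f.
Proof.
case: ev => mv lv vh; move=> cf s.
suff : `|v f s| <= 1 * supnorm f by rewrite mul1r.
apply: (@linC_bound R K cK (fun f => v f s) 1 (lin_op_pt s lv) ler01) => // g cg g1.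
apply: le_trans (sn_ge cS s (mv g cg)) _; rewrite -nv.
apply: ub_le_sup; last by exists g.
case: bv => M HM; exists `|M| => _ [g' [cg' g1'] <-].
apply: le_trans (HM g' cg') _; apply: mul_le_abs => //.
by have := sn_ge0 cK cg'.
Qed.


Lemma dir2 : exists T : (K -> R) -> (S -> R), U_embedding T.
Proof.
have [phi [cphi phi01 phi1]] := peak_fun R S hS cS (range h) closed_range gd.
case: ev => mv lv vh.
have phi_h k : phi (h k) = 1 by apply/phi1; exists k.
pose T := fun f : K -> R => fun s => phi s * v f s.
have mT : maps_cont T by move=> f cf; apply: cont_mul => //; exact: mv.
have lT : lin_op T.
  move=> f g a cf cg; rewrite /T lv //; apply: funext => s /=; ring.
have nT (f : K -> R) : continuous f -> supnorm (T f) = supnorm f.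
  move=> cf; apply/le_anti/andP; split.
    apply: sn_le; first by have := sn_ge0 cK cf.
    move=> s; rewrite normrM; have hv := v_contr f cf s; apply: le_trans hv.
    have /andP[p0 p1] := phi01 s; rewrite ger0_norm // -[leRHS]mul1r ler_wpM2r //.
  apply: sn_le; first by have := sn_ge0 cS (mT f cf).
  by move=> k; have := sn_ge cS (h k) (mT f cf); rewrite /T phi_h mul1r vh.
exists T; split => //; split => //; split => //.
move=> x dx.
pose y := fun g : S -> R => x (fun k => g (h k)).
have cgh (g : S -> R) : continuous g -> continuous (fun k => g (h k)).
  by move=> cg k; apply: continuous_comp; [exact: ch | exact: cg].
have ngh (g : S -> R) : continuous g -> supnorm (fun k => g (h k)) <= supnorm g.
  move=> cg; apply: sn_le; [by have := sn_ge0 cS cg | move=> k; by have := sn_ge cS (h k) cg].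
have dy : dual_elem y.
  split.
    by move=> g1 g2 a c1 c2; rewrite /y; exact: (dual_linC dx) (cgh _ c1) (cgh _ c2).
  have [M [M0 HM]] := dual_bound cK dx; exists M => g cg.
  by apply: le_trans (HM _ (cgh _ cg)) _; exact: ler_wpM2l (ngh _ cg).
have yT f : continuous f -> y (T f) = x f.
  by move=> cf; rewrite /y /T; congr x; apply: funext => k; rewrite phi_h mul1r vh.
have dnx : dnorm y = dnorm x.
  apply/le_anti/andP; split.
    apply: dn_le => g cg g1; rewrite /y; apply: (dn_ge cK dx (cgh _ cg)).
    exact: le_trans (ngh _ cg) g1.
  by apply: dn_le => f cf f1; rewrite -yT //; apply: (dn_ge cS dy (mT _ cf)); rewrite nT.
exists y; split => // y' dy' y'T dny' g cg.
have cw (g0 : S -> R) : continuous g0 -> continuous (fun s => (1 - phi s) * g0 s).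
  move=> cg0; apply: cont_mul => //; apply: cont_add; [exact: cont_cst| exact: cont_opp].
have lw : linC (fun g => y' (fun s => (1 - phi s) * g s)).
  move=> g1 g2 a c1 c2 /=; rewrite -(dual_linC dy'); [|exact: cw|exact: cw].
  by congr y'; apply: funext => s; ring.
have d1 (g0 : S -> R) : continuous g0 -> y' (fun s => (1 - phi s) * g0 s) = 0.
  move=> cg0; apply/normr0_eq0/le_anti; rewrite normr_ge0 andbT.
  suff : `|y' (fun s => (1 - phi s) * g0 s)| <= 0 * supnorm g0 by rewrite mul0r.
  apply: (linC_bound cS 0 lw (lexx 0)) cg0 => g1 cg1 g11.
  set c := y' _.
  suff -> : c = 0 by rewrite normr0.
  apply: (@small_zero R _ 1 ler01) => e e0; rewrite mul1r.
  have [f [cf f1 hf]] := dn_adh cK e dx e0.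
  wlog xf0 : f cf f1 hf / 0 <= x f.
    move=> Hw; case: (lerP 0 (x f)) => xf; first exact: (Hw f).
    have xN : x (fun k => - f k) = - x f.
      rewrite -mulN1r -(linC_scale (-1) (dual_linC dx) cf).
      by congr x; apply: funext => k; rewrite mulN1r.
    apply: (Hw (fun k => - f k)).
    - exact: cont_opp.
    - apply: sn_le => // k; rewrite normrN; exact: le_trans (sn_ge cK k cf) f1.
    - by rewrite xN normrN.
    - by rewrite xN oppr_ge0 ltW.
  have bound t : `|t| <= 1 -> `|x f + t * c| <= dnorm x.
    move=> t1; rewrite -dny' -(y'T f cf).
    have -> : y' (T f) + t * c = y' (fun s => t * ((1 - phi s) * g1 s) + T f s).
      rewrite (dual_linC dy'); [by rewrite addrC | exact: cw | exact: mT].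
    apply: (dn_ge cS dy').
      by apply: cont_add; [apply: cont_mul; [exact: cont_cst | exact: cw] | exact: mT].
    apply: sn_le => // s; rewrite /T.
    have /andP[p0 p1] := phi01 s.
    have hg := le_trans (sn_ge cS s cg1) g11; have hv := le_trans (v_contr f cf s) f1.
    apply: le_trans (ler_normD _ _) _; rewrite !normrM (ger0_norm p0).
    have p1' : 0 <= 1 - phi s by rewrite subr_ge0.
    rewrite (ger0_norm p1').
    have a1 : `|t| * `|g1 s| <= 1 by rewrite -[1]mulr1; apply: ler_pM.
    have a2 : (1 - phi s) * (`|t| * `|g1 s|) <= 1 - phi s by rewrite -[leRHS]mulr1 ler_wpM2l.
    have a3 : phi s * `|v f s| <= phi s by rewrite -[leRHS]mulr1 ler_wpM2l.
    rewrite mulrCA; lra.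
  have b1 : `|x f + c| <= dnorm x by rewrite -[c]mul1r; apply: bound; rewrite normr1.
  have b2 : `|x f - c| <= dnorm x by rewrite -mulN1r; apply: bound; rewrite normrN normr1.
  have := @abs2 R _ _ _ b1 b2.
  rewrite (ger0_norm xf0) in hf *; lra.
have d2 (g0 : S -> R) : continuous g0 -> (forall k, g0 (h k) = 0) -> y' g0 = 0.
  move=> cg0 g0h.
  have [M [M0 HM]] := dual_bound cS dy'.
  apply: (@small_zero R _ M M0) => e e0.
  pose C := (fun s => `|g0 s|) @^-1` [set r | e <= r].
  have clC : closed C.
    by apply: preimage_closed; [move=> s _; exact: cont_norm cg0 s | exact: closed_ge].
  have cC : compact C := subclosed_compact clC cS (@subsetT _ C).
  have cphi' : continuous (fun s => 1 - phi s) by apply: cont_add; [exact: cont_cst| exact: cont_opp].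
  have cI : compact [set 1 - phi s | s in C].
    exact: continuous_compact (continuous_subspaceT cphi') cC.
  have clI := compact_closed (@Rhausdorff R) cI.
  have nI : ~ [set 1 - phi s | s in C] 0.
    case=> s Cs /eqP; rewrite subr_eq0 eq_sym => /eqP /phi1 [k _ hk].
    by move: Cs; rewrite /C /= -hk g0h normr0 leNgt e0.
  have : nbhs (0 : R) (~` [set 1 - phi s | s in C]).
    by apply: open_nbhs_nbhs; split => //; rewrite openC.
  move=> /nbhs_ballP [d d0 Hd].
  have dC s : C s -> d <= 1 - phi s.
    move=> Cs; rewrite leNgt; apply/negP => lt; apply: (Hd (1 - phi s)); last by exists s.
    rewrite -ball_normE /ball_ /= sub0r normrN ger0_norm //.
    by have /andP[_ p1] := phi01 s; rewrite subr_ge0.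
  pose m s := Num.max (1 - phi s) d.
  have m0 s : 0 < m s by rewrite /m lt_max d0 orbT.
  have cm : continuous m by apply: cont_max => //; exact: cont_cst.
  pose q := fun s => g0 s * (m s)^-1.
  have cq : continuous q.
    apply: cont_mul => // s; apply: continuousV; [by rewrite gt_eqF | exact: cm].
  have := d1 q cq => wq.
  have -> : y' g0 = y' (fun s => g0 s - (1 - phi s) * q s).
    by rewrite (linC_sub (dual_linC dy') cg0 (cw _ cq)) wq subr0.
  apply: le_trans (HM _ _) _.
    by apply: cont_add => //; apply: cont_opp; exact: cw.
  apply: ler_wpM2l => //; apply: sn_le; first exact: ltW.
  move=> s; rewrite /q.
  have /andP[p0 p1] := phi01 s.
  have ms := m0 s.
  have e1 : g0 s - (1 - phi s) * (g0 s * (m s)^-1) = g0 s * (1 - (1 - phi s) / m s).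
    by rewrite mulrBr mulr1 mulrCA mulrA.
  rewrite e1 normrM.
  have r0 : 0 <= (1 - phi s) / m s by apply: divr_ge0; [rewrite subr_ge0 | exact: ltW].
  have r1 : (1 - phi s) / m s <= 1 by rewrite ler_pdivrMr // mul1r /m le_max lexx.
  case: (pselect (C s)) => Cs.
    have -> : m s = 1 - phi s by rewrite /m; apply/max_idPl; exact: dC.
    rewrite divff ?subrr ?normr0 ?mulr0 ?ltW //.
    by apply/eqP => hz; have := dC s Cs; rewrite hz leNgt d0.
  have gs : `|g0 s| < e by rewrite ltNge; apply/negP => hh; apply: Cs.
  have r1' : 0 <= 1 - (1 - phi s) / m s by rewrite subr_ge0.
  rewrite (ger0_norm r1').
  have := normr_ge0 (g0 s); nra.
set f0 := fun k => g (h k).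
have cf0 := cgh g cg.
have : y' (fun s => g s - T f0 s) = 0.
  apply: d2; first by apply: cont_add => //; apply: cont_opp; exact: mT.
  by move=> k; rewrite /T /f0 phi_h mul1r vh // subrr.
rewrite (linC_sub (dual_linC dy') cg (mT _ cf0)) y'T // => /eqP.
by rewrite subr_eq0 => /eqP ->.
Qed.

End Dir2.

Lemma sep (R : realType) (X : topologicalType) (hX : hausdorff_space X)
  (cX : compact [set: X]) (B : set X) (a : X) : closed B -> ~ B a ->
  exists g : X -> R, [/\ continuous g, g a = 1 & forall b, B b -> g b = 0].
Proof.
move=> cB Ba.
have ca : closed [set a] := @accessible_closed_set1 X (hausdorff_accessible hX) a.
have dj : B `&` [set a] = set0.
  by apply/seteqP; split => // z [Bz /= za]; apply: Ba; rewrite -za.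
have [g [cg g0 g1 _]] := urysohn_ext_itv (compact_normal hX cX) cB ca dj (@ltr01 R).
exists g; split => //.
  by apply: g1; exists a.
by move=> b Bb; apply: g0; exists b.
Qed.

Lemma sn_attain (R : realType) (X : topologicalType) (cX : compact [set: X])
  (f : X -> R) : continuous f -> [set: X] !=set0 -> exists x, `|f x| = supnorm f.
Proof.
move=> cf [x0 _].
have cE : compact [set `|f k| | k in [set: X]].
  exact: continuous_compact (continuous_subspaceT (cont_norm cf)) cX.
have ne : [set `|f k| | k in [set: X]] !=set0 by exists `|f x0|, x0.
have [k _ hk] := compact_closed (@Rhausdorff R) cE (closure_sup ne (sn_ub cX cf)).
by exists k.
Qed.

Section Dir1.
Variables (R : realType) (K S : topologicalType).
Hypotheses (hK : hausdorff_space K) (cK : compact [set: K])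
  (hS : hausdorff_space S) (cS : compact [set: S]) (neK : [set: K] !=set0).
Variable (T : (K -> R) -> (S -> R)).
Hypothesis (hU : U_embedding T).

Let mT : maps_cont T. Proof. by case: hU. Qed.
Let lT : lin_op T. Proof. by case: hU => _ []. Qed.
Let iT : isometry_on T. Proof. by case: hU => _ [] _ []. Qed.
Let uT := match hU with conj _ (conj _ (conj _ u)) => u end.

Let one : K -> R := fun _ => 1.
Let c1 : continuous one. Proof. exact: cont_cst. Qed.
Let sone : supnorm one = 1.
Proof.
apply/le_anti/andP; split; first by apply: sn_le => // k; rewrite normr1.
by case: neK => k0 _; have := sn_ge cK k0 c1; rewrite /one normr1.
Qed.

Let u := T one.
Let cu : continuous u. Proof. exact: mT. Qed.
Let ule s : `|u s| <= 1.
Proof. by have := sn_ge cS s cu; rewrite /u iT // sone. Qed.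
Let u2 s : `|u s| = 1 -> u s * u s = 1.
Proof. by move=> h1; rewrite -expr2 -real_normK ?num_real // h1 expr1n. Qed.

Let Tl s := lin_op_pt s lT.

Let Sne : [set: S] !=set0.
Proof.
apply/set0P/negP => /eqP S0.
have : supnorm u <= 0.
  by apply: sn_le => // s; suff : (set0 : set S) s by []; rewrite -S0.
by rewrite /u iT // sone ler10.
Qed.

Let ule_mul (f : K -> R) s : continuous f -> `|u s| * `|T f s| <= supnorm f.
Proof.
move=> cf; have := sn_ge cS s (mT _ cf); rewrite iT // => h1.
have := ule s; have := normr_ge0 (T f s); have := normr_ge0 (u s).
move=> a b c; apply: le_trans h1; rewrite -[leRHS]mul1r; exact: ler_wpM2r.
Qed.

Let Tle (f : K -> R) s : continuous f -> `|T f s| <= supnorm f.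
Proof. by move=> cf; have := sn_ge cS s (mT _ cf); rewrite iT. Qed.

Definition Pk (k : K) (g : K -> R) :=
  [/\ continuous g, (forall k', 0 <= g k' <= 1) & g k = 1].

Let Pk_norm k g : Pk k g -> supnorm g = 1.
Proof.
case=> cg g01 gk; apply/le_anti/andP; split.
  apply: sn_le => // k'; have /andP[a b] := g01 k'; by rewrite ger0_norm.
by have := sn_ge cK k cg; rewrite gk normr1.
Qed.

Lemma Iexists k : exists s, forall g, Pk k g -> `|T g s| = 1.
Proof.
pose Z g := [set s | `|T g s| = 1].
pose F := filter_from (Pk k) Z.
have P1 : Pk k one by split => // k'; rewrite ler01 lexx.
have fF : Filter F.
  apply: filter_from_filter; first by exists one.
  move=> g1 g2 [cg1 g101 g1k] [cg2 g201 g2k].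
  pose g3 := fun k' => 2^-1 * g1 k' + 2^-1 * g2 k'.
  have cg3 : continuous g3 by apply: cont_add; apply: cont_mul => //; exact: cont_cst.
  exists g3.
    split => //; last by rewrite /g3 g1k g2k mulr1; lra.
    move=> k'; have /andP[a1 a2] := g101 k'; have /andP[b1 b2] := g201 k'.
    rewrite /g3; apply/andP; split; lra.
  move=> s; rewrite /Z /= => hs.
  have e3 : T g3 s = 2^-1 * T g1 s + 2^-1 * T g2 s.
    rewrite /g3 (Tl s) //; last by apply: cont_mul => //; exact: cont_cst.
    by rewrite (linC_scale _ (Tl s) cg2).
  have n1 := Tle _ s cg1; have n2 := Tle _ s cg2.
  rewrite (Pk_norm k g1 (And3 cg1 g101 g1k)) in n1.
  rewrite (Pk_norm k g2 (And3 cg2 g201 g2k)) in n2.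
  have i2 : `|2^-1 : R| = 2^-1 by rewrite ger0_norm // invr_ge0.
  move: hs; rewrite e3 -mulrDr normrM i2 => hs.
  have tri := ler_normD (T g1 s) (T g2 s).
  by split; apply/le_anti/andP; split => //; lra.
have pF : ProperFilter F.
  apply: filter_from_proper => g Pg.
  have [cg _ _] := Pg.
  have [s hs] := @sn_attain R S cS (T g) (mT _ cg) Sne.
  by exists s; rewrite /Z /= hs iT // (Pk_norm k g Pg).
have [s [_ cls]] := cS _ pF filterT.
exists s => g Pg; have [cg _ _] := Pg.
have := @preimage_closed S R (fun s => `|T g s|) [set r | r = 1] _ (@closed_eq R 1) s.
apply.
  by move=> z _; apply: cont_norm; exact: mT.
move=> B nB; apply: cls nB; by exists g.
Qed.


Lemma vanish k s : (forall g, Pk k g -> `|T g s| = 1) ->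
  forall f, continuous f -> f k = 0 -> T f s = 0.
Proof.
move=> Hs.
have small f : continuous f -> f k = 0 -> supnorm f <= 1 -> T f s = 0.
  move=> cf fk f1.
  pose g := fun k' => 1 - `|f k'|.
  have cg : continuous g by apply: cont_add; [exact: cont_cst | apply: cont_opp; exact: cont_norm].
  have fle k' : `|f k'| <= 1 by have := sn_ge cK k' cf; move/le_trans; apply.
  have Pg : Pk k g.
    split => //; last by rewrite /g fk normr0 subr0.
    move=> k'; have := fle k'; have := normr_ge0 (f k'); rewrite /g => ? ?.
    apply/andP; split; lra.
  have bnd t : `|t| = 1 -> `|T g s + t * T f s| <= 1.
    move=> t1.
    have -> : T g s + t * T f s = T (fun k' => t * f k' + g k') s.
      by rewrite (Tl s) // addrC.
    have cw : continuous (fun k' => t * f k' + g k') by exact: cont_lin.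
    have := Tle _ s cw; move/le_trans; apply.
    apply: sn_le => // k'; rewrite /g.
    have ta : `|t * f k'| = `|f k'| by rewrite normrM t1 mul1r.
    have := fle k'; move: ta; set a := f k'; set b := t * a => ta fa.
    have : `|b| <= `|a| by rewrite ta.
    move=> /ler_normlP [h1 h2].
    rewrite ler_norml; apply/andP; split; lra.
  have b1 : `|T g s + T f s| <= 1 by rewrite -[T f s]mul1r; apply: bnd; rewrite normr1.
  have b2 : `|T g s - T f s| <= 1 by rewrite -mulN1r; apply: bnd; rewrite normrN normr1.
  have := @abs2 R _ _ _ b1 b2; rewrite (Hs g Pg) => h.
  by apply/normr0_eq0/le_anti/andP; split; [lra | exact: normr_ge0].
move=> f cf fk.
have n0 : 0 < supnorm f + 1 by have := sn_ge0 cK cf; move=> ?; lra.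
pose f' := fun k' => (supnorm f + 1)^-1 * f k'.
have cf' : continuous f' by apply: cont_mul => //; exact: cont_cst.
have : T f' s = 0.
  apply: small => //; first by rewrite /f' fk mulr0.
  apply: sn_le => // k'; rewrite /f' normrM ger0_norm; last by rewrite invr_ge0 ltW.
  rewrite ler_pdivrMl // mulr1; have := sn_ge cK k' cf; lra.
rewrite /f' (linC_scale _ (Tl s) cf) => /eqP; rewrite mulf_eq0 invr_eq0 => /orP[|/eqP //].
by rewrite gt_eqF.
Qed.

Lemma rep k s : (forall g, Pk k g -> `|T g s| = 1) ->
  `|u s| = 1 /\ forall f, continuous f -> T f s = f k * u s.
Proof.
move=> Hs; split.
  by apply: Hs; split => // k'; rewrite /one ler01 lexx.
move=> f cf.
have fk0 : (fun k' => - f k * one k' + f k') k = 0 by rewrite /one mulr1 addNr.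
have := vanish k s Hs _ (cont_lin (- f k) c1 cf) fk0.
rewrite (Tl s) // -/u mulNr => /eqP; rewrite addrC subr_eq0 => /eqP //.
Qed.


Let hexists k : exists s, `|u s| = 1 /\ forall f, continuous f -> T f s = f k * u s.
Proof. have [s Hs] := Iexists k; exists s; exact: rep Hs. Qed.
Let hsig := choice hexists.
Let h := projT1 hsig.
Let hu k : `|u (h k)| = 1. Proof. exact: (projT2 hsig k).1. Qed.
Let hT k f : continuous f -> T f (h k) = f k * u (h k).
Proof. exact: (projT2 hsig k).2. Qed.

Let es_dual s0 : `|u s0| = 1 ->
  dual_elem (fun g : S -> R => u s0 * g s0) /\ dnorm (fun g : S -> R => u s0 * g s0) = 1.
Proof.
move=> us.
have d : dual_elem (fun g : S -> R => u s0 * g s0).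
  split; first by move=> g1 g2 a _ _ /=; ring.
  by exists 1 => g cg; rewrite normrM us !mul1r; have := sn_ge cS s0 cg.
split => //; apply/le_anti/andP; split.
  apply: dn_le => g cg g1; rewrite normrM us mul1r.
  by have := sn_ge cS s0 cg; move/le_trans; apply.
have s1 : supnorm (fun _ : S => (1:R)) <= 1 by apply: sn_le => // ?; rewrite normr1.
have := dn_ge cS d (cont_cst 1) s1.
by rewrite mulr1 us.
Qed.

Let dk_dual k : dual_elem (fun f : K -> R => f k) /\ dnorm (fun f : K -> R => f k) = 1.
Proof.
have d : dual_elem (fun f : K -> R => f k).
  split; first by [].
  by exists 1 => f cf; rewrite mul1r; have := sn_ge cK k cf.
split => //; apply/le_anti/andP; split.
  by apply: dn_le => f cf f1; have := sn_ge cK k cf; move/le_trans; apply.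
have s1 : supnorm one <= 1 by rewrite sone.
have := dn_ge cK d c1 s1.
by rewrite /one normr1.
Qed.

Lemma Q2 k s : `|u s| = 1 -> (forall f, continuous f -> T f s = f k * u s) -> s = h k.
Proof.
move=> us Ts.
have [ddk ndk] := dk_dual k.
have [y [dy yT ny uy]] := uT _ ddk.
have E s0 : `|u s0| = 1 -> (forall f, continuous f -> T f s0 = f k * u s0) ->
    forall g, continuous g -> u s0 * g s0 = y g.
  move=> us0 Ts0 g cg; have [d0 n0] := es_dual s0 us0.
  apply: (uy _ d0) => //; last by rewrite n0 ndk.
  by move=> f cf /=; rewrite Ts0 // mulrCA u2 // mulr1.
have Eg g : continuous g -> u s * g s = u (h k) * g (h k).
  by move=> cg; rewrite (E s us Ts g cg) (E (h k) (hu k) (hT k) g cg).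
have uu : u s = u (h k) by have := Eg _ (cont_cst 1); rewrite !mulr1.
have u0 : u s != 0 by rewrite -normr_eq0 us oner_eq0.
apply: contrapT => nsh.
have cl : closed [set h k] := @accessible_closed_set1 S (hausdorff_accessible hS) (h k).
have [g [cg gs gh]] := @sep R S hS cS [set h k] s cl nsh.
have := Eg g cg; rewrite -uu gs gh // => /(mulfI u0) /eqP.
by rewrite oner_eq0.
Qed.


Let hinj : injective h.
Proof.
move=> k1 k2 e; apply: contrapT => nk.
have cl : closed [set k2] := @accessible_closed_set1 K (hausdorff_accessible hK) k2.
have [g [cg g1 g2]] := @sep R K hK cK [set k2] k1 cl nk.
have u0 : u (h k1) != 0 by rewrite -normr_eq0 hu oner_eq0.
have := hT k1 g cg; rewrite e hT // g1 (g2 k2) // mul0r mul1r => /esym/eqP.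
by rewrite -e (negbTE u0).
Qed.

Let clusterEq k s' (Phi : S -> R) (psi : K -> R) :
  continuous Phi -> continuous psi -> (forall k', Phi (h k') = psi k') ->
  cluster (h @ k) s' -> Phi s' = psi k.
Proof.
move=> cP cp eP cl; apply/eqP; rewrite -subr_eq0 -normr_eq0; apply/negP => /negP ne.
set e := `|Phi s' - psi k|.
have e0 : 0 < e by rewrite lt_def ne normr_ge0.
have e2 : 0 < e / 2 by rewrite divr_gt0.
pose A := [set s | exists k', `|psi k - psi k'| < e / 2 /\ s = h k'].
pose B := [set s | `|Phi s' - Phi s| < e / 2].
have FA : (h @ k) A.
  move/cvgrPdist_lt: (cp k) => /(_ _ e2).
  by apply: filterS => k' hk'; exists k'.
have nB : nbhs s' B by move/cvgrPdist_lt: (cP s') => /(_ _ e2).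
have [_ [[k' [hk1 ->]] hk2]] := cl A B FA nB.
move: hk2; rewrite /B /= eP => hk2.
have : e < e.
  rewrite {1}/e.
  have -> : Phi s' - psi k = (Phi s' - psi k') + (psi k' - psi k) by rewrite addrA subrK.
  apply: le_lt_trans (ler_normD _ _) _.
  rewrite distrC in hk1.
  by rewrite [in ltRHS](splitr e); apply: ltrD.
by rewrite ltxx.
Qed.

Let hcont : continuous h.
Proof.
move=> k.
have sub s' : cluster (h @ k) s' -> s' = h k.
  move=> cl.
  have us : `|u s'| = 1.
    apply: (@clusterEq k s' (fun s => `|u s|) (fun _ => 1) (cont_norm cu) (cont_cst 1) _ cl).
    by move=> k'; rewrite hu.
  apply: Q2 => // f cf.
  have H : u s' * T f s' = f k.
    apply: (@clusterEq k s' (fun s => u s * T f s) f (cont_mul cu (mT _ cf)) cf _ cl) => k'.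
    by rewrite hT // mulrCA u2 ?hu // mulr1.
  by rewrite -H -mulrA [T f s' * _]mulrC mulrA u2 // mul1r.
apply: (@compact_cluster_set1 S (h k) (h @ k) setT hS cS filterT _ filterT).
apply/seteqP; split => s'; first exact: sub.
move=> /= ->.
have [s1 [_ cl]] := cS (h @ k) _ filterT.
by rewrite -(sub s1 cl).
Qed.

Let clr : closed (range h).
Proof.
apply: compact_closed hS _; apply: continuous_compact => //.
exact: continuous_subspaceT.
Qed.


Let cgh (g : S -> R) : continuous g -> continuous (fun k => g (h k)).
Proof. by move=> cg k; apply: continuous_comp; [exact: hcont | exact: cg]. Qed.

Let Q3 s : `|u s| = 1 -> range h s.
Proof.
move=> us.
pose x := fun f : K -> R => u s * T f s.
have dx : dual_elem x.
  split; first by move=> f g a cf cg; rewrite /x (Tl s) //; ring.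
  by exists 1 => f cf; rewrite /x normrM us !mul1r; have := Tle f s cf.
have nx : dnorm x = 1.
  apply/le_anti/andP; split.
    apply: dn_le => f cf f1; rewrite /x normrM us mul1r.
    by have := Tle f s cf; move/le_trans; apply.
  have s1 : supnorm one <= 1 by rewrite sone.
  by have := dn_ge cK dx c1 s1; rewrite /x -/u u2 // normr1.
have [y [dy yT ny uy]] := uT _ dx.
have [d1 n1] := es_dual s us.
have E1 g : continuous g -> u s * g s = y g.
  by move=> cg; apply: (uy _ d1) => //; rewrite n1 nx.
pose w (g : S -> R) := fun k => u (h k) * g (h k).
have cw g : continuous g -> continuous (w g).
  by move=> cg; apply: cont_mul; apply: cgh.
pose y2 := fun g : S -> R => x (w g).
have d2 : dual_elem y2.
  split.
    move=> g1 g2 a c1' c2'; rewrite /y2 -(dual_linC dx); [|exact: cw|exact: cw].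
    by congr x; apply: funext => k; rewrite /w; ring.
  exists 1 => g cg; rewrite mul1r /y2.
  have := dual_norm_le cK dx (cw g cg); rewrite nx mul1r; move/le_trans; apply.
  apply: sn_le => [|k]; first by have := sn_ge0 cS cg.
  by rewrite /w normrM hu mul1r; have := sn_ge cS (h k) cg.
have y2T f : continuous f -> y2 (T f) = x f.
  move=> cf; rewrite /y2 /w; congr x; apply: funext => k.
  by rewrite hT // mulrCA u2 ?hu // mulr1.
have n2 : dnorm y2 = dnorm x.
  rewrite nx; apply/le_anti/andP; split.
    apply: dn_le => g cg g1; rewrite /y2.
    have := dual_norm_le cK dx (cw g cg); rewrite nx mul1r; move/le_trans; apply.
    apply: sn_le => // k; rewrite /w normrM hu mul1r.
    by have := sn_ge cS (h k) cg; move/le_trans; apply.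
  have s1 : supnorm (T one) <= 1 by rewrite iT // sone.
  have := dn_ge cS d2 (mT _ c1) s1; rewrite y2T // /x -/u u2 // normr1.
  by [].
have E2 g : continuous g -> y2 g = y g by move=> cg; exact: uy.
apply: contrapT => nr.
have [g [cg gs gh]] := @sep R S hS cS (range h) s clr nr.
have := E1 g cg; rewrite -(E2 g cg) gs mulr1 /y2 /w.
have -> : (fun k => u (h k) * g (h k)) = (fun _ => 0).
  by apply: funext => k; rewrite gh ?mulr0 //; exists k.
rewrite (linC_0 (dual_linC dx)) => /eqP.
by rewrite -normr_eq0 us oner_eq0.
Qed.


Lemma dir1 : exists h : K -> S,
     [/\ top_embedding h,
         (exists v : (K -> R) -> (S -> R), [/\ ext_op h v, op_bounded v & opnorm v = 1]) &
         Gdelta (range h)].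
Proof.
exists h; split.
- split => // U oU.
  exists (~` [set h k | k in ~` U]); split.
    rewrite openC; apply: compact_closed hS _; apply: continuous_compact.
      exact: continuous_subspaceT.
    apply: subclosed_compact cK _ => //; exact: open_closedC.
  apply/seteqP; split.
    move=> _ [k Uk <-]; split; last by exists k.
    by move=> [k' nUk' /hinj e]; apply: nUk'; rewrite e.
  move=> s0 [nI [k _ ks0]]; rewrite -ks0 in nI *; apply: contrapT => nU; apply: nI.
  by exists k => //; move=> Uk; apply: nU; exists k.
- pose v := fun (f : K -> R) s => u s * T f s.
  have vle f : continuous f -> forall s, `|v f s| <= supnorm f.
    by move=> cf s; rewrite /v normrM ule_mul //.
  exists v; split.
  + split.
    * by move=> f cf; apply: cont_mul => //; exact: mT.
    * by move=> f g a cf cg; rewrite /v; apply: funext => s; rewrite lT //; ring.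
    * by move=> f cf k; rewrite /v hT // mulrCA u2 ?hu // mulr1.
  + exists 1 => f cf; rewrite mul1r; apply: sn_le; first by have := sn_ge0 cK cf.
    exact: vle.
  + apply/le_anti/andP; split.
      apply: ge_sup.
        exists (supnorm (v (fun _ => 0))), (fun _ => 0) => //; split; first exact: cont_cst.
        by apply: sn_le => // ?; rewrite normr0.
      move=> _ [f [cf f1] <-]; apply: sn_le => // s.
      by have := vle f cf s; move/le_trans; apply.
    case: neK => k0 _.
    have cv : continuous (v one) by apply: cont_mul => //; exact: mT.
    have e1 : 1 <= supnorm (v one).
      have := sn_ge cS (h k0) cv.
      by rewrite /v hT // mulrCA u2 ?hu // mulr1 /one normr1.
    apply: le_trans e1 _; apply: ub_le_sup.
      exists 1 => _ [f [cf f1] <-]; apply: sn_le => // s.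
      by have := vle f cf s; move/le_trans; apply; apply: le_trans f1.
    by exists one; first by split => //; rewrite sone.
- exists (fun n => [set s | 1 - n.+1%:R^-1 < `|u s|]); split.
    move=> n; apply: (@open_comp S R (fun s => `|u s|) [set r | 1 - n.+1%:R^-1 < r]).
      by move=> s _; exact: cont_norm cu s.
    exact: open_gt.
  apply/seteqP; split.
    move=> _ [k _ <-] n _ /=; rewrite hu ltrBlDr ltrDl invr_gt0 ltr0n //.
  move=> s Hs; apply: Q3; apply/le_anti/andP; split; first exact: ule.
  rewrite leNgt; apply/negP => lt1.
  have [n hn] := ltr_add_invr lt1.
  have := Hs n I; rewrite /= ltrBlDr => hn'.
  by have := lt_trans hn hn'; rewrite ltxx.
Qed.

End Dir1.

Theorem theorem6p22 (R : realType) (K S : topologicalType)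
  (hK : hausdorff_space K) (cK : compact [set: K])
  (hS : hausdorff_space S) (cS : compact [set: S])
  (neK : [set: K] !=set0) :
  (exists T : (K -> R) -> (S -> R), U_embedding T) <->
  (exists h : K -> S,
     [/\ top_embedding h,
         (exists v : (K -> R) -> (S -> R), [/\ ext_op h v, op_bounded v & opnorm v = 1]) &
         Gdelta (range h)]).
Proof.
split.
  by case=> T hU; exact: (@dir1 R K S hK cK hS cS neK T hU).
case=> h [[ch _ _] [v [ev bv nv]] gd].
exact: (@dir2 R K S cK hS cS h v ch ev bv nv gd).
Qed.
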